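(* Let $\eta$ be a generalized strategy in the game $\Gamma(F,G)$. Then there exists a cutoff strategy $\tilde\eta$ such that either $\eta$ is equivalent to $\tilde\eta$, or $\eta$ is strictly dominated by $\tilde\eta$, i.e., $\pi(\eta,\eta')<\pi(\tilde\eta,\eta')$ for every generalized strategy $\eta'$ of the opponent.
   Context: Game $\Gamma(F,G)$ without communication: player 1's type $u$ is drawn from a distribution on $[0,1]$ with continuous (atomless) CDF $F$ and density $f$; player 2's type independently from a CDF $G$ on $[0,1]$. Each chooses $L$ or $R$; a player of type $u$ gets $1-u$ if both choose $L$, $u$ if both choose $R$, and $0$ otherwise. A generalized strategy of player 1 is a measurable $\eta:[0,1]\to\Delta(\{L,R\})$, with $\eta_u(L)$ the probability type $u$ plays $L$; a generalized strategy $\eta'$ of player 2 is defined likewise on her types. $\pi(\eta,\eta')$ is player 1's ex-ante expected payoff (type $u\sim F$, opponent type $\sim G$). $\eta$ and $\tilde\eta$ are equivalent if $\int_0^1 f(u)\mathbf 1\{\eta(u)\ne\tilde\eta(u)\}du=0$. A cutoff strategy is one for which there is $x\in[0,1]$ with $\eta(u)=L$ for all $u<x$ and $\eta(u)=R$ for all $u>x$. *)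

(* Defs.v *)
From HB Require Import structures.
From mathcomp Require Import all_boot all_order all_algebra.
From mathcomp Require Import all_classical all_reals all_analysis.
Set Implicit Arguments. Unset Strict Implicit. Unset Printing Implicit Defensive.
Import Order.TTheory GRing.Theory Num.Theory.
Local Open Scope classical_set_scope.
Local Open Scope ring_scope.

(* A mixed action in Delta({L,R}) is represented by its probability of L,
   a number in [0,1].  A generalized strategy is a measurable map
   eta : [0,1] -> [0,1], u |-> eta_u(L) (values outside [0,1] irrelevant). *)
Definition gen_strategy {R : realType} (eta : R -> R) : Prop :=
  measurable_fun `[0%R : R, 1%R]%classic eta /\
  (forall u, u \in `[0%R : R, 1%R] -> 0 <= eta u <= 1).

(* Player 1's ex-ante expected payoff: type u has density f on [0,1],
   opponent type v ~ G (a probability measure concentrated on [0,1]);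
   given types (u,v) and independent mixing, the payoff is
   eta_u(L) eta'_v(L) (1-u) + eta_u(R) eta'_v(R) u. *)
Definition payoff {R : realType} (f : R -> R)
    (G : {measure set R -> \bar R}) (eta eta' : R -> R) : \bar R :=
  (\int[lebesgue_measure]_(u in `[0%R : R, 1%R]%classic)
     ((f u)%:E *
      \int[G]_(v in `[0%R : R, 1%R]%classic)
        (eta u * eta' v * (1 - u) + (1 - eta u) * (1 - eta' v) * u)%:E))%E.

Definition strat_equiv {R : realType} (f : R -> R) (eta eta' : R -> R) : Prop :=
  (\int[lebesgue_measure]_(u in `[0%R : R, 1%R]%classic)
     (f u * (if `[< eta u <> eta' u >] then 1 else 0))%:E = 0)%E.

Definition cutoff {R : realType} (eta : R -> R) : Prop :=
  exists2 x : R, x \in `[0%R : R, 1%R] &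
    forall u, u \in `[0%R : R, 1%R] -> (u < x -> eta u = 1) /\ (x < u -> eta u = 0).

(* Main.v *)
Require Import Defs.
From HB Require Import structures.
From mathcomp Require Import all_boot all_order all_algebra.
From mathcomp Require Import all_classical all_reals all_analysis.
From mathcomp Require Import measurable_realfun.
From mathcomp Require Import ring lra.
Import Order.TTheory GRing.Theory Num.Theory.
Local Open Scope classical_set_scope.
Local Open Scope ring_scope.

Lemma bounded_by (R : realType) (D : set R) (g : R -> R) (B : R) :
  (forall x, D x -> `|g x| <= B) -> [bounded g x | x in D].
Proof.
move=> hB; exists B; split; first exact: num_real.
move=> M BM x Dx /=; exact: (le_trans (hB x Dx) (ltW BM)).
Qed.

Lemma intfg (R : realType) (f g : R -> R) (D : set R) (mD : measurable D) :
  (@lebesgue_measure R).-integrable D (EFin \o f) ->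
  measurable_fun D g -> [bounded g x | x in D] ->
  (@lebesgue_measure R).-integrable D (fun u => (f u * g u)%:E).
Proof.
move=> fi mg bg.
have := @integrableMl _ (measurableTypeR R) R lebesgue_measure D mD _ g fi mg bg.
by apply: eq_integrable => // u _ /=; rewrite EFinM.
Qed.

Lemma innerG (R : realType) (G : {measure set R -> \bar R})
  (G_01 : G `[0%R : R, 1%R]%classic = 1%E) (e' : R -> R) :
  gen_strategy e' ->
  exists q : R, 0 <= q <= 1 /\ forall c1 c2 : R,
    (\int[G]_(v in `[0%R : R, 1%R]%classic) (c1 * e' v + c2)%:E = (c1 * q + c2)%:E)%E.
Proof.
case=> me' be'.
have mI : measurable (`[0%R : R, 1%R]%classic) by exact: measurable_itv.
have Gfin : (G `[0%R : R, 1%R]%classic < +oo)%E by rewrite G_01 ltry.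
have ie' : G.-integrable `[0%R : R, 1%R]%classic (EFin \o e').
  apply: measurable_bounded_integrable => //.
  apply: (@bounded_by _ _ _ 1) => x Ix.
  have /andP[h0 h1] := be' x Ix.
  by rewrite ger0_norm.
have /fin_numP[h1 h2] := integrable_fin_num mI ie'.
set J := (\int[G]_(v in _) _)%E in h1 h2.
have : J \is a fin_num by apply/fin_numP.
move=> /fineK Jq.
exists (fine J); split.
  apply/andP; split.
    rewrite -lee_fin Jq; apply: integral_ge0 => x Ix /=.
    by have /andP[] := be' x Ix; rewrite lee_fin.
  rewrite -lee_fin Jq.
  have -> : (1%:E = \int[G]_(v in `[0%R : R, 1%R]%classic) (cst 1 v))%E.
    by rewrite (integral_cst _ mI) G_01 mul1e.
  apply: ge0_le_integral => //.
  - by move=> x Ix /=; have /andP[] := be' x Ix; rewrite lee_fin.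
  - exact/measurable_EFinP.
  - by move=> x Ix /=; have /andP[] := be' x Ix; rewrite lee_fin.
move=> c1 c2.
have ic : G.-integrable `[0%R : R, 1%R]%classic (EFin \o (cst c2)).
  apply: measurable_bounded_integrable => //.
  exact: bounded_cst.
have ie2 : G.-integrable `[0%R : R, 1%R]%classic (EFin \o (fun v => c1 * e' v)).
  rewrite (_ : EFin \o _ = (fun v => c1%:E * (EFin \o e') v))%E; last first.
    by apply/funext => v /=; rewrite EFinM.
  exact: integrableZl.
rewrite (_ : (fun v => (c1 * e' v + c2)%R%:E) = (EFin \o (fun v => c1 * e' v)%R) \+ (EFin \o cst c2))%E; last first.
  by apply/funext => v /=; rewrite EFinD.
rewrite integralD_EFin //=.
under eq_integral do rewrite EFinM.
rewrite integralZl // integral_cst // G_01 mule1.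
by rewrite -/J -Jq -EFinM -EFinD.
Qed.

Lemma payoff_eq (R : realType) (f : R -> R) (G : {measure set R -> \bar R})
  (e e' : R -> R) (q : R) :
  (forall c1 c2 : R,
    (\int[G]_(v in `[0%R : R, 1%R]%classic) (c1 * e' v + c2)%:E = (c1 * q + c2)%:E)%E) ->
  payoff f G e e' =
  (\int[lebesgue_measure]_(u in `[0%R : R, 1%R]%classic)
     (f u * (e u * (q - u) + (1 - q) * u))%:E)%E.
Proof.
move=> hG; rewrite /payoff; apply: eq_integral => u _.
rewrite (_ : (fun v => (e u * e' v * (1 - u) + (1 - e u) * (1 - e' v) * u)%:E) =
   (fun v => ((e u * (1 - u) - (1 - e u) * u) * e' v + (1 - e u) * u)%:E)); last first.
  by apply/funext => v; congr (_%:E); ring.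
by rewrite hG -EFinM; congr (_%:E); ring.
Qed.

Theorem lemmaA1 (R : realType) (f : R -> R) (G : {measure set R -> \bar R})
  (f_meas : measurable_fun `[0%R : R, 1%R]%classic f)
  (f_ge0 : forall u, u \in `[0%R : R, 1%R] -> 0 <= f u)
  (f_int1 : (\int[lebesgue_measure]_(u in `[0%R : R, 1%R]%classic) (f u)%:E = 1)%E)
  (G_T : G setT = 1%E) (G_01 : G `[0%R : R, 1%R]%classic = 1%E)
  (eta : R -> R) (eta_gs : gen_strategy eta) :
  exists teta : R -> R,
    [/\ gen_strategy teta, cutoff teta &
      strat_equiv f eta teta \/
      (forall eta' : R -> R, gen_strategy eta' ->
         (payoff f G eta eta' < payoff f G teta eta')%E)].
Proof.
set I := `[0%R : R, 1%R]%classic.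
have mI : @measurable _ (measurableTypeR R) I by exact: measurable_itv.
have fi : (@lebesgue_measure R).-integrable I (EFin \o f).
  apply/integrableP; split; first exact/measurable_EFinP.
  have -> : (\int[lebesgue_measure]_(u in I) `|(EFin \o f) u| =
     \int[lebesgue_measure]_(u in I) (f u)%:E)%E.
    apply: eq_integral => u /set_mem Iu /=.
    by rewrite ger0_norm // f_ge0.
  by rewrite f_int1 ltry.
case: eta_gs => meta beta.
have beta' : forall u, I u -> `|eta u| <= 1.
  by move=> u Iu; have /andP[h0 h1] := beta u Iu; rewrite ger0_norm.
have ifeta := @intfg _ f eta I mI fi meta (@bounded_by _ _ _ _ beta').
have /fin_numP[hm1 hm2] := integrable_fin_num mI ifeta.
set M := (\int[_]_(u in _) _)%E in hm1 hm2.
have Mf : M \is a fin_num by apply/fin_numP.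
have Mq := fineK Mf.
set m := fine M in Mq.
have m01 : 0 <= m <= 1.
  apply/andP; split.
    rewrite -lee_fin Mq; apply: integral_ge0 => u Iu /=.
    by have /andP[h0 h1] := beta u Iu; rewrite lee_fin mulr_ge0 // f_ge0.
  rewrite -lee_fin Mq -f_int1; apply: le_integral => //.
  move=> u /set_mem Iu /=; have /andP[h0 h1] := beta u Iu; rewrite lee_fin.
  by rewrite ler_piMr // f_ge0.
pose F x := parameterized_integral (@lebesgue_measure R) 0 x f.
have Fc := @parameterized_integral_continuous R 0 1 f ler01 fi.
have F0 : F 0 = 0 by rewrite /F /parameterized_integral set_itv1 Rintegral_set1.
have F1 : F 1 = 1 by rewrite /F /parameterized_integral /Rintegral f_int1.
have [x x01 Fx] : exists2 x, x \in `[0%R : R, 1%R] & F x = m.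
  apply: IVT => //; rewrite F0 F1.
  by rewrite min_l ?ler01 // max_r ?ler01.
pose teta : R -> R := \1_(`]-oo, x]%classic).
have tetaE u : teta u = if u <= x then 1 else 0.
  rewrite /teta indicE; case: ifPn => h.
    by rewrite mem_set //= in_itv /=.
  by rewrite memNset //= in_itv /= (negbTE h).
have mteta : measurable_fun I teta by apply: measurable_indic; exact: measurable_itv.
have bteta u : I u -> 0 <= teta u <= 1 by rewrite tetaE; case: ifPn => _ _; rewrite ?ler01 ?lexx.
have bteta' u : I u -> `|teta u| <= 1.
  by move=> Iu; have /andP[h0 h1] := bteta u Iu; rewrite ger0_norm.
have ifteta := @intfg _ f teta I mI fi mteta (@bounded_by _ _ _ _ bteta').
have K : (\int[lebesgue_measure]_(u in I) (f u * teta u)%:E = M)%E.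
  have -> : (\int[lebesgue_measure]_(u in I) (f u * teta u)%:E =
     \int[lebesgue_measure]_(u in I) ((EFin \o f) \_ `]-oo, x]%classic) u)%E.
    apply: eq_integral => u _; rewrite patchE tetaE /=.
    case: ifPn => h.
      by rewrite mem_set ?mulr1 //= in_itv /=.
    by rewrite memNset ?mulr0 //= in_itv /= (negbTE h).
  rewrite -integral_mkcondr.
  have -> : I `&` `]-oo, x]%classic = `[0%R, x]%classic.
    apply/seteqP; split => u /=; rewrite /I /= !in_itv /=.
      by case=> /andP[-> _] ->.
    case/andP => u0 ux; split => //; apply/andP; split => //.
    by move: x01; rewrite in_itv /= => /andP[_ x1]; exact: le_trans x1.
  rewrite -Mq -Fx /F /parameterized_integral /Rintegral fineK //.
  apply: integrable_fin_num; first exact: measurable_itv.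
  apply: integrableS fi => //.
  apply: subset_itvl; rewrite bnd_simp.
  by move: x01; rewrite in_itv /= => /andP[_ x1].
have x1 : x <= 1 by move: x01; rewrite in_itv /= => /andP[].
have x0 : 0 <= x by move: x01; rewrite in_itv /= => /andP[].
exists teta; split.
- split => // u Iu; exact: bteta.
- exists x => // u Iu; rewrite !tetaE; split => ux.
    by rewrite (ltW ux).
  by rewrite leNgt ux.
pose g u := (teta u - eta u) * (x - u).
have mg : measurable_fun I g.
  apply: measurable_funM; first exact: measurable_funB.
  apply: measurable_funB => //; exact: measurable_id.
have bg u : I u -> `|g u| <= 1.
  move=> Iu; have /andP[a0 a1] := bteta u Iu; have /andP[b0 b1] := beta u Iu.
  move: Iu; rewrite /I /= in_itv /= => /andP[u0 u1].
  rewrite /g normrM; apply: mulr_ile1 => //; rewrite ler_norml; apply/andP; split; lra.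
have ih := @intfg _ f g I mI fi mg (@bounded_by _ _ _ _ bg).
have h0 u : I u -> 0 <= f u * g u.
  move=> Iu; apply: mulr_ge0; first exact: f_ge0.
  have /andP[b0 b1] := beta u Iu.
  rewrite /g tetaE; case: ifPn => ux.
    by apply: mulr_ge0; rewrite subr_ge0.
  rewrite -ltNge in ux; apply: mulr_le0; lra.
have [H0|Hpos] : (\int[lebesgue_measure]_(u in I) (f u * g u)%:E = 0 \/
    0 < \int[lebesgue_measure]_(u in I) (f u * g u)%:E)%E.
  have := integral_ge0 (@lebesgue_measure R) (D := I) (f := fun u => (f u * g u)%:E).
  rewrite le_eqVlt => /(_ _)/orP[]; first by move=> u Iu; rewrite lee_fin h0.
    by move/eqP => <-; left.
  by right.
- left.
  have mfg : measurable_fun I (EFin \o (fun u => f u * g u)%R).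
    by apply/measurable_EFinP; exact: measurable_funM.
  have hae := (@ae_eq_integral_abs _ _ _ (@lebesgue_measure R) I mI _ mfg).1.
  have {hae} : ae_eq (@lebesgue_measure R) I (EFin \o (fun u => f u * g u)%R) (cst 0%E).
    apply: hae; rewrite -H0; apply: eq_integral => u /set_mem Iu /=.
    by rewrite ger0_norm // h0.
  case=> N [mN N0 HN].
  rewrite /strat_equiv.
  pose k u := f u * (if `[< eta u <> teta u >] then 1 else 0).
  have kE : k = (fun u => f u * \1_(~` [set 0%R]) (eta u - teta u)).
    apply/funext => u; rewrite /k indicE; congr (_ * _).
    case: asboolP => h.
      by rewrite mem_set //= => /eqP; rewrite subr_eq0 => /eqP.
    rewrite memNset //= => hn; apply: h => e; apply: hn; by rewrite e subrr.
  have mk : measurable_fun I (EFin \o k).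
    apply/measurable_EFinP; rewrite kE; apply: measurable_funM => //.
    apply: measurableT_comp; last exact: measurable_funB.
    apply: measurable_indic; apply: measurableC; exact: measurable_set1.
  have k0 u : I u -> 0 <= k u.
    move=> Iu; rewrite /k; apply: mulr_ge0; first exact: f_ge0.
    by case: ifPn => _; rewrite ?ler01 ?lexx.
  have hk : ae_eq (@lebesgue_measure R) I (EFin \o k) (cst 0%E).
    exists (N `|` [set x]); split.
    - apply: measurableU => //; exact: measurable_set1.
    - rewrite measureU0 //; exact: lebesgue_measure_set1.
    move=> u /= /not_implyP [Iu ku].
    case: (pselect (u = x)) => [->|ux]; first by right.
    left; apply: HN => /= H; apply: ku.
    have := H Iu => /= /eqP; rewrite eqe mulf_eq0 => /orP[/eqP fu0|].
      by rewrite /k fu0 mul0r.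
    rewrite /g mulf_eq0 => /orP[|]; rewrite subr_eq0 => /eqP e.
      rewrite /k; case: asboolP => [h|_]; last by rewrite mulr0.
      by exfalso; apply: h; rewrite e.
    by exfalso; apply: ux.
  have := (@ae_eq_integral_abs _ _ _ (@lebesgue_measure R) I mI _ mk).2 hk.
  move=> <-; apply: eq_integral => u /set_mem Iu /=.
  by rewrite ger0_norm // k0.
- right => eta' ge'.
  have [q [q01 hq]] := @innerG _ G G_01 eta' ge'.
  rewrite (@payoff_eq _ f G eta eta' q hq) (@payoff_eq _ f G teta eta' q hq).
  case/andP: q01 => q0 q1.
  pose a u := eta u * (q - u) + (1 - q) * u.
  pose b u := (q - x) * (teta u - eta u).
  have ma : measurable_fun I a.
    apply: measurable_funD; apply: measurable_funM => //.
    by apply: measurable_funB.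
  have mb : measurable_fun I b.
    by apply: measurable_funM => //; apply: measurable_funB.
  have bab u : I u -> `|a u + b u| <= 3.
    move=> Iu; have /andP[a0 a1] := bteta u Iu; have /andP[b0 b1] := beta u Iu.
    move: Iu; rewrite /I /= in_itv /= => /andP[u0 u1].
    rewrite /a /b ler_norml; apply/andP; split; nra.
  have ba u : I u -> `|a u| <= 2.
    move=> Iu; have /andP[b0 b1] := beta u Iu.
    move: Iu; rewrite /I /= in_itv /= => /andP[u0 u1].
    rewrite /a ler_norml; apply/andP; split; nra.
  have iab := @intfg _ f (fun u => a u + b u) I mI fi (measurable_funD ma mb)
     (@bounded_by _ _ _ _ bab).
  have ia := @intfg _ f a I mI fi ma (@bounded_by _ _ _ _ ba).
  have bb u : I u -> `|b u| <= 1.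
    move=> Iu; have /andP[a0 a1] := bteta u Iu; have /andP[b0 b1] := beta u Iu.
    rewrite /b ler_norml; apply/andP; split; nra.
  have ib := @intfg _ f b I mI fi mb (@bounded_by _ _ _ _ bb).
  have E1 : (fun u => (f u * (teta u * (q - u) + (1 - q) * u))%:E) =
      ((EFin \o (fun u => f u * (a u + b u))%R) \+ (EFin \o (fun u => f u * g u)%R))%E.
    by apply/funext => u /=; rewrite -EFinD; congr (_%:E); rewrite /a /b /g; ring.
  rewrite E1 (integralD_EFin mI iab ih).
  have E2 : (EFin \o (fun u => f u * (a u + b u))%R) =
      ((EFin \o (fun u => f u * a u)%R) \+ (EFin \o (fun u => f u * b u)%R))%E.
    by apply/funext => u /=; rewrite -EFinD; congr (_%:E); ring.
  rewrite E2 (integralD_EFin mI ia ib).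
  have Zb : (\int[lebesgue_measure]_(u in I) (EFin \o (fun u => f u * b u)%R) u = 0)%E.
    have -> : (EFin \o (fun u => f u * b u)%R) =
        (fun u => (q - x)%:E * ((f u * teta u)%:E - (f u * eta u)%:E))%E.
      by apply/funext => u /=; rewrite -EFinB -EFinM; congr (_%:E); rewrite /b; ring.
    rewrite integralZl //; last exact: integrableB.
    rewrite (integralB_EFin mI ifteta ifeta) K.
    by rewrite subee // mule0.
  rewrite Zb adde0 lteDl //.
  exact (integrable_fin_num mI ia).
Qed.
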